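(* The set $\widetilde K_2=\{A\in GU_3(\mathbb{Z}_2): A_{11}\equiv A_{22}\equiv A_{33}\equiv 1\pmod{2+2i}\}$ is a group, and $GU_3(\mathbb{Z}_2)=\widetilde K_2\rtimes GU_3(\mathbb{Z})$.
   Context: $GU_3(R)=\{g\in GL_3(R[i]):gg^*=\lambda I,\ \lambda\in R^\times\}$ with $g^*$ the conjugate transpose ($i\mapsto -i$); here $R[i]=\mathbb{Z}_2[i]$ for $R=\mathbb{Z}_2$. $GU_3(\mathbb{Z})$ is the group of monomial matrices with nonzero entries in $\{\pm1,\pm i\}$. *)

(* Defs.v *)
From Stdlib Require Import ZArith.
Open Scope Z_scope.

Record Z2 := mkZ2 {
  z2seq : nat -> Z ;
  z2coh : forall n : nat, (2 ^ Z.of_nat n | z2seq (S n) - z2seq n) }.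

Definition Z2eq (x y : Z2) : Prop :=
  forall n : nat, (2 ^ Z.of_nat n | z2seq x n - z2seq y n).

Lemma Z2const_coh (c : Z) : forall n : nat, (2 ^ Z.of_nat n | c - c).
Proof. intros n. rewrite Z.sub_diag. apply Z.divide_0_r. Qed.

Definition Z2const (c : Z) : Z2 := mkZ2 (fun _ => c) (Z2const_coh c).
Definition Z2zero : Z2 := Z2const 0.
Definition Z2one : Z2 := Z2const 1.

Lemma Z2add_coh (x y : Z2) : forall n : nat,
  (2 ^ Z.of_nat n | (z2seq x (S n) + z2seq y (S n)) - (z2seq x n + z2seq y n)).
Proof.
intros n.
replace ((z2seq x (S n) + z2seq y (S n)) - (z2seq x n + z2seq y n))
  with ((z2seq x (S n) - z2seq x n) + (z2seq y (S n) - z2seq y n)) by ring.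
apply Z.divide_add_r; apply z2coh.
Qed.
Definition Z2add (x y : Z2) : Z2 :=
  mkZ2 (fun n => z2seq x n + z2seq y n) (Z2add_coh x y).

Lemma Z2opp_coh (x : Z2) : forall n : nat,
  (2 ^ Z.of_nat n | (- z2seq x (S n)) - (- z2seq x n)).
Proof.
intros n.
replace ((- z2seq x (S n)) - (- z2seq x n))
  with (- (z2seq x (S n) - z2seq x n)) by ring.
apply Z.divide_opp_r; apply z2coh.
Qed.
Definition Z2opp (x : Z2) : Z2 := mkZ2 (fun n => - z2seq x n) (Z2opp_coh x).

Lemma Z2mul_coh (x y : Z2) : forall n : nat,
  (2 ^ Z.of_nat n | (z2seq x (S n) * z2seq y (S n)) - (z2seq x n * z2seq y n)).
Proof.
intros n.
replace ((z2seq x (S n) * z2seq y (S n)) - (z2seq x n * z2seq y n))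
  with (z2seq x (S n) * (z2seq y (S n) - z2seq y n)
        + (z2seq x (S n) - z2seq x n) * z2seq y n) by ring.
apply Z.divide_add_r.
- apply Z.divide_mul_r; apply z2coh.
- apply Z.divide_mul_l; apply z2coh.
Qed.
Definition Z2mul (x y : Z2) : Z2 :=
  mkZ2 (fun n => z2seq x n * z2seq y n) (Z2mul_coh x y).

Definition Z2unit (x : Z2) : Prop := exists y : Z2, Z2eq (Z2mul x y) Z2one.

Record Z2i := mkZ2i { re : Z2 ; im : Z2 }.

Definition Z2ieq (a b : Z2i) : Prop := Z2eq (re a) (re b) /\ Z2eq (im a) (im b).
Definition Zi (x y : Z) : Z2i := mkZ2i (Z2const x) (Z2const y).
Definition ofZ2 (x : Z2) : Z2i := mkZ2i x Z2zero.
Definition Z2izero : Z2i := Zi 0 0.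
Definition Z2ione : Z2i := Zi 1 0.
Definition Z2iadd (a b : Z2i) : Z2i := mkZ2i (Z2add (re a) (re b)) (Z2add (im a) (im b)).
Definition Z2iopp (a : Z2i) : Z2i := mkZ2i (Z2opp (re a)) (Z2opp (im a)).
Definition Z2isub (a b : Z2i) : Z2i := Z2iadd a (Z2iopp b).
Definition Z2imul (a b : Z2i) : Z2i :=
  mkZ2i (Z2add (Z2mul (re a) (re b)) (Z2opp (Z2mul (im a) (im b))))
        (Z2add (Z2mul (re a) (im b)) (Z2mul (im a) (re b))).
Definition Z2iconj (a : Z2i) : Z2i := mkZ2i (re a) (Z2opp (im a)).

Definition Z2icong (a b d : Z2i) : Prop :=
  exists c : Z2i, Z2ieq (Z2isub a b) (Z2imul d c).

Inductive idx : Type := i1 | i2 | i3.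

Definition M3 : Type := idx -> idx -> Z2i.

Definition meq (A B : M3) : Prop := forall i j, Z2ieq (A i j) (B i j).
Definition mmul (A B : M3) : M3 := fun i j =>
  Z2iadd (Z2imul (A i i1) (B i1 j))
         (Z2iadd (Z2imul (A i i2) (B i2 j)) (Z2imul (A i i3) (B i3 j))).
Definition idx_eqb (i j : idx) : bool :=
  match i, j with i1, i1 | i2, i2 | i3, i3 => true | _, _ => false end.
Definition mscalar (a : Z2i) : M3 := fun i j => if idx_eqb i j then a else Z2izero.
Definition mI : M3 := mscalar Z2ione.
Definition mstar (A : M3) : M3 := fun i j => Z2iconj (A j i).

Definition GL3 (g : M3) : Prop :=
  exists h : M3, meq (mmul g h) mI /\ meq (mmul h g) mI.

Definition GU3 (g : M3) : Prop :=
  GL3 g /\ exists lam : Z2, Z2unit lam /\ meq (mmul g (mstar g)) (mscalar (ofZ2 lam)).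

(* GU_3(Z), viewed inside GU_3(Z_2): monomial matrices whose nonzero
   entries lie in {1, -1, i, -i} *)
Definition unit4 (a : Z2i) : Prop :=
  Z2ieq a (Zi 1 0) \/ Z2ieq a (Zi (-1) 0) \/ Z2ieq a (Zi 0 1) \/ Z2ieq a (Zi 0 (-1)).

Definition GU3Z (A : M3) : Prop :=
  exists sigma : idx -> idx,
    (forall i j, sigma i = sigma j -> i = j) /\
    (forall i j, (j = sigma i -> unit4 (A i j)) /\
                 (j <> sigma i -> Z2ieq (A i j) Z2izero)).

Definition Ktilde2 (A : M3) : Prop :=
  GU3 A /\ forall i : idx, Z2icong (A i i) Z2ione (Zi 2 2).

(* Main.v *)
Require Import Defs.
From Stdlib Require Import ZArith Lia List Bool Setoid Morphisms.
Import ListNotations.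
Open Scope Z_scope.

Lemma Z2eq_seq x y : (forall n, z2seq x n = z2seq y n) -> Z2eq x y.
Proof. intros H n. rewrite H, Z.sub_diag. apply Z.divide_0_r. Qed.

Lemma Z2eq_refl x : Z2eq x x.
Proof. apply Z2eq_seq; auto. Qed.
Lemma Z2eq_sym x y : Z2eq x y -> Z2eq y x.
Proof. intros H n. replace (z2seq y n - z2seq x n) with (-(z2seq x n - z2seq y n)) by ring.
  apply Z.divide_opp_r; apply H. Qed.
Lemma Z2eq_trans x y z : Z2eq x y -> Z2eq y z -> Z2eq x z.
Proof. intros H1 H2 n.
  replace (z2seq x n - z2seq z n) with ((z2seq x n - z2seq y n) + (z2seq y n - z2seq z n)) by ring.
  apply Z.divide_add_r; auto. Qed.
#[global] Instance Z2eq_Equiv : Equivalence Z2eq.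
Proof. split; [exact Z2eq_refl|exact Z2eq_sym|exact Z2eq_trans]. Qed.

Lemma Z2add_compat a a' b b' : Z2eq a a' -> Z2eq b b' -> Z2eq (Z2add a b) (Z2add a' b').
Proof. intros H1 H2 n; simpl.
  replace (z2seq a n + z2seq b n - (z2seq a' n + z2seq b' n)) with
   ((z2seq a n - z2seq a' n) + (z2seq b n - z2seq b' n)) by ring.
  apply Z.divide_add_r; auto. Qed.
Lemma Z2mul_compat a a' b b' : Z2eq a a' -> Z2eq b b' -> Z2eq (Z2mul a b) (Z2mul a' b').
Proof. intros H1 H2 n; simpl.
  replace (z2seq a n * z2seq b n - z2seq a' n * z2seq b' n) with
   (z2seq a n * (z2seq b n - z2seq b' n) + (z2seq a n - z2seq a' n) * z2seq b' n) by ring.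
  apply Z.divide_add_r; [apply Z.divide_mul_r|apply Z.divide_mul_l]; auto. Qed.
Lemma Z2opp_compat a a' : Z2eq a a' -> Z2eq (Z2opp a) (Z2opp a').
Proof. intros H1 n; simpl.
  replace (- z2seq a n - - z2seq a' n) with (-(z2seq a n - z2seq a' n)) by ring.
  apply Z.divide_opp_r; auto. Qed.
#[global] Instance Z2add_Proper : Proper (Z2eq ==> Z2eq ==> Z2eq) Z2add.
Proof. intros ? ? ? ? ? ?; apply Z2add_compat; auto. Qed.
#[global] Instance Z2mul_Proper : Proper (Z2eq ==> Z2eq ==> Z2eq) Z2mul.
Proof. intros ? ? ? ? ? ?; apply Z2mul_compat; auto. Qed.
#[global] Instance Z2opp_Proper : Proper (Z2eq ==> Z2eq) Z2opp.
Proof. intros ? ? ?; apply Z2opp_compat; auto. Qed.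

#[global] Instance Z2ieq_Equiv : Equivalence Z2ieq.
Proof. split.
  - intros x; split; reflexivity.
  - intros x y [H1 H2]; split; symmetry; auto.
  - intros x y z [H1 H2] [H3 H4]; split; etransitivity; eauto. Qed.

Lemma Z2iadd_compat a a' b b' : Z2ieq a a' -> Z2ieq b b' -> Z2ieq (Z2iadd a b) (Z2iadd a' b').
Proof. intros [] []; split; simpl; apply Z2add_compat; auto. Qed.
Lemma Z2imul_compat a a' b b' : Z2ieq a a' -> Z2ieq b b' -> Z2ieq (Z2imul a b) (Z2imul a' b').
Proof. intros [H1 H2] [H3 H4]; split; simpl;
  repeat first [apply Z2add_compat | apply Z2mul_compat | apply Z2opp_compat]; auto. Qed.
Lemma Z2iopp_compat a a' : Z2ieq a a' -> Z2ieq (Z2iopp a) (Z2iopp a').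
Proof. intros [] ; split; simpl; apply Z2opp_compat; auto. Qed.
Lemma Z2iconj_compat a a' : Z2ieq a a' -> Z2ieq (Z2iconj a) (Z2iconj a').
Proof. intros [] ; split; simpl; [|apply Z2opp_compat]; auto. Qed.
#[global] Instance Z2iadd_Proper : Proper (Z2ieq ==> Z2ieq ==> Z2ieq) Z2iadd.
Proof. intros ? ? ? ? ? ?; apply Z2iadd_compat; auto. Qed.
#[global] Instance Z2imul_Proper : Proper (Z2ieq ==> Z2ieq ==> Z2ieq) Z2imul.
Proof. intros ? ? ? ? ? ?; apply Z2imul_compat; auto. Qed.
#[global] Instance Z2iopp_Proper : Proper (Z2ieq ==> Z2ieq) Z2iopp.
Proof. intros ? ? ?; apply Z2iopp_compat; auto. Qed.
#[global] Instance Z2iconj_Proper : Proper (Z2ieq ==> Z2ieq) Z2iconj.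
Proof. intros ? ? ?; apply Z2iconj_compat; auto. Qed.
#[global] Instance Z2isub_Proper : Proper (Z2ieq ==> Z2ieq ==> Z2ieq) Z2isub.
Proof. intros ? ? ? ? ? ?; unfold Z2isub; rewrite H, H0; reflexivity. Qed.
#[global] Instance ofZ2_Proper : Proper (Z2eq ==> Z2ieq) ofZ2.
Proof. intros ? ? ?; split; simpl; auto; reflexivity. Qed.

Ltac zsimpl := cbv beta iota delta [Z2add Z2mul Z2opp Z2const Z2zero Z2one z2seq
   Z2iadd Z2imul Z2iopp Z2isub Z2iconj Zi ofZ2 Z2izero Z2ione re im].
Ltac zseq := first
  [ split; apply Z2eq_seq; intro; zsimpl; ring
  | apply Z2eq_seq; intro; zsimpl; ring ].

#[global] Instance meq_Equiv : Equivalence meq.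
Proof. split.
  - intros A i j; reflexivity.
  - intros A B H i j; symmetry; auto.
  - intros A B C H1 H2 i j; etransitivity; eauto. Qed.

#[global] Instance mmul_Proper : Proper (meq ==> meq ==> meq) mmul.
Proof. intros A A' HA B B' HB i j; unfold mmul.
  rewrite (HA i i1), (HA i i2), (HA i i3), (HB i1 j), (HB i2 j), (HB i3 j); reflexivity. Qed.
#[global] Instance mstar_Proper : Proper (meq ==> meq) mstar.
Proof. intros A A' HA i j; unfold mstar; rewrite (HA j i); reflexivity. Qed.

Lemma mmul_assoc A B C : meq (mmul (mmul A B) C) (mmul A (mmul B C)).
Proof. intros i j; unfold mmul; zseq. Qed.
Lemma mstar_mul A B : meq (mstar (mmul A B)) (mmul (mstar B) (mstar A)).
Proof. intros i j; unfold mmul, mstar; zseq. Qed.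
Lemma mstar_mstar A : meq (mstar (mstar A)) A.
Proof. intros i j; unfold mstar; zseq. Qed.
Lemma mmul_1_l A : meq (mmul mI A) A.
Proof. intros i j; unfold mmul, mI, mscalar; destruct i, j; simpl; zseq. Qed.
Lemma mmul_1_r A : meq (mmul A mI) A.
Proof. intros i j; unfold mmul, mI, mscalar; destruct i, j; simpl; zseq. Qed.

Definition msc (a : Z2i) (M : M3) : M3 := fun i j => Z2imul a (M i j).
#[global] Instance msc_Proper : Proper (Z2ieq ==> meq ==> meq) msc.
Proof. intros a a' Ha A A' HA i j; unfold msc; rewrite Ha, (HA i j); reflexivity. Qed.
Lemma mscalar_l a A : meq (mmul (mscalar a) A) (msc a A).
Proof. intros i j; unfold mmul, msc, mscalar; destruct i, j; simpl; zseq. Qed.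
Lemma mscalar_r a A : meq (mmul A (mscalar a)) (msc a A).
Proof. intros i j; unfold mmul, msc, mscalar; destruct i, j; simpl; zseq. Qed.
Lemma msc_mul_l a A B : meq (mmul (msc a A) B) (msc a (mmul A B)).
Proof. intros i j; unfold mmul, msc; zseq. Qed.
Lemma msc_mul_r a A B : meq (mmul A (msc a B)) (msc a (mmul A B)).
Proof. intros i j; unfold mmul, msc; zseq. Qed.
Lemma msc_msc a b A : meq (msc a (msc b A)) (msc (Z2imul a b) A).
Proof. intros i j; unfold msc; zseq. Qed.
Lemma msc_scalar a b : meq (msc a (mscalar b)) (mscalar (Z2imul a b)).
Proof. intros i j; unfold msc, mscalar; destruct (idx_eqb i j); zseq. Qed.
Lemma msc_one A : meq (msc Z2ione A) A.
Proof. intros i j; unfold msc; zseq. Qed.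
Lemma mstar_msc a A : meq (mstar (msc a A)) (msc (Z2iconj a) (mstar A)).
Proof. intros i j; unfold msc, mstar; zseq. Qed.
Lemma ofZ2_mul x y : Z2ieq (ofZ2 (Z2mul x y)) (Z2imul (ofZ2 x) (ofZ2 y)).
Proof. zseq. Qed.
Lemma ofZ2_conj x : Z2ieq (Z2iconj (ofZ2 x)) (ofZ2 x).
Proof. zseq. Qed.

Lemma Z2unit_mul x y : Z2unit x -> Z2unit y -> Z2unit (Z2mul x y).
Proof. intros [u Hu] [v Hv]. exists (Z2mul u v).
  transitivity (Z2mul (Z2mul x u) (Z2mul y v)); [zseq|]. rewrite Hu, Hv; zseq. Qed.

Lemma GU3_meq A A' : meq A A' -> GU3 A -> GU3 A'.
Proof. intros E [[h [H1 H2]] [la [Hu H3]]]. split.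
  - exists h; rewrite <- E; auto.
  - exists la; split; auto. rewrite <- E; auto. Qed.

Lemma GU3_mul A B : GU3 A -> GU3 B -> GU3 (mmul A B).
Proof. intros [[ha [Ha1 Ha2]] [la [Hla HA]]] [[hb [Hb1 Hb2]] [lb [Hlb HB]]]. split.
  - exists (mmul hb ha). split.
    + rewrite mmul_assoc, <- (mmul_assoc B hb ha), Hb1, mmul_1_l; auto.
    + rewrite mmul_assoc, <- (mmul_assoc ha A B), Ha2, mmul_1_l; auto.
  - exists (Z2mul la lb). split; [apply Z2unit_mul; auto|].
    rewrite mstar_mul, mmul_assoc, <- (mmul_assoc B), HB, mscalar_l, msc_mul_r, HA,
      msc_scalar. intros i j; unfold mscalar; destruct (idx_eqb i j); [zseq|reflexivity]. Qed.

Lemma GU3_adj A h la : meq (mmul h A) mI -> meq (mmul A (mstar A)) (mscalar (ofZ2 la)) ->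
  meq (mstar A) (msc (ofZ2 la) h).
Proof. intros H1 H2. rewrite <- (mmul_1_l (mstar A)), <- H1, mmul_assoc, H2, mscalar_r.
  reflexivity. Qed.

Lemma GU3_inv A h : GU3 A -> meq (mmul A h) mI -> meq (mmul h A) mI -> GU3 h.
Proof. intros [_ [la [[u Hu] HA]]] H1 H2. split.
  - exists A; split; auto.
  - exists u; split. { exists la. rewrite <- Hu. zseq. }
    assert (Hs := GU3_adj _ _ _ H2 HA).
    assert (Hh : meq h (msc (ofZ2 u) (mstar A))).
    { rewrite Hs, msc_msc, <- ofZ2_mul.
      assert (E: Z2eq (Z2mul u la) Z2one) by (rewrite <- Hu; zseq).
      rewrite E. symmetry. transitivity (msc Z2ione h); [|apply msc_one].
      apply msc_Proper; [zseq|reflexivity]. }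
    rewrite Hh, mstar_msc, mstar_mstar, msc_mul_l, msc_mul_r, Hs, msc_mul_l, H2, !msc_msc.
    unfold mI. rewrite msc_scalar. intros i j; unfold mscalar; destruct (idx_eqb i j).
    + transitivity (ofZ2 (Z2mul u (Z2mul la u))); [zseq|]. rewrite Hu. zseq.
    + reflexivity. Qed.

Definition n4 (x : Z) : Z := x mod 4.
Definition r4 : Type := (Z * Z)%type.
Definition radd (x y : r4) : r4 := (n4 (fst x + fst y), n4 (snd x + snd y)).
Definition rmul (x y : r4) : r4 :=
  (n4 (fst x * fst y - snd x * snd y), n4 (fst x * snd y + snd x * fst y)).
Definition rconj (x : r4) : r4 := (fst x, n4 (- snd x)).
Definition rho (z : Z2i) : r4 := (n4 (z2seq (re z) 2), n4 (z2seq (im z) 2)).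

Lemma n4_cong a b : (4 | a - b) -> n4 a = n4 b.
Proof. intros [k Hk]. unfold n4. replace a with (b + k * 4) by lia.
  apply Z_mod_plus_full. Qed.
Lemma n4_div a : (4 | a - n4 a).
Proof. unfold n4. exists (a / 4). pose proof (Z.div_mod a 4). lia. Qed.

Lemma rho_eq z w : Z2ieq z w -> rho z = rho w.
Proof. intros [H1 H2]. unfold rho. specialize (H1 2%nat). specialize (H2 2%nat).
  change (2 ^ Z.of_nat 2) with 4 in H1, H2. f_equal; apply n4_cong; auto. Qed.

Ltac d4 := repeat match goal with
  | |- (4 | ?a - n4 ?a) => apply n4_div
  | |- (4 | ?a + ?b) => apply Z.divide_add_r
  | |- (4 | - ?a) => apply Z.divide_opp_r
  | |- (4 | (?a - n4 ?a) * ?b) => apply Z.divide_mul_l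
  | |- (4 | ?b * (?a - n4 ?a)) => apply Z.divide_mul_r
  end.

Lemma rho_add z w : rho (Z2iadd z w) = radd (rho z) (rho w).
Proof. unfold rho, radd; cbn [fst snd re im Z2iadd Z2add z2seq]. f_equal; apply n4_cong;
  match goal with |- (4 | ?a + ?b - (n4 ?a + n4 ?b)) =>
    replace (a + b - (n4 a + n4 b)) with ((a - n4 a) + (b - n4 b)) by ring end; d4. Qed.

Lemma rho_mul z w : rho (Z2imul z w) = rmul (rho z) (rho w).
Proof. unfold rho, rmul; cbn [fst snd re im Z2imul Z2add Z2mul Z2opp z2seq]. f_equal; apply n4_cong.
  - match goal with |- (4 | ?a * ?b + - (?c * ?d) - (n4 ?a * n4 ?b - n4 ?c * n4 ?d)) =>
    replace (a * b + - (c * d) - (n4 a * n4 b - n4 c * n4 d)) with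
      ((a - n4 a) * b + n4 a * (b - n4 b) + - ((c - n4 c) * d + n4 c * (d - n4 d))) by ring end; d4.
  - match goal with |- (4 | ?a * ?b + ?c * ?d - (n4 ?a * n4 ?b + n4 ?c * n4 ?d)) =>
    replace (a * b + c * d - (n4 a * n4 b + n4 c * n4 d)) with
      ((a - n4 a) * b + n4 a * (b - n4 b) + ((c - n4 c) * d + n4 c * (d - n4 d))) by ring end; d4.
Qed.

Lemma rho_conj z : rho (Z2iconj z) = rconj (rho z).
Proof. unfold rho, rconj; cbn [fst snd re im Z2iconj Z2opp z2seq]. f_equal; apply n4_cong.
  match goal with |- (4 | - ?a - - n4 ?a) =>
    replace (- a - - n4 a) with (- (a - n4 a)) by ring end; d4. Qed.

Lemma rho_Zi a b : rho (Zi a b) = (n4 a, n4 b).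
Proof. reflexivity. Qed.

Lemma rho_ofZ2 x : rho (ofZ2 x) = (n4 (z2seq x 2), 0).
Proof. reflexivity. Qed.

Definition allr4 : list r4 :=
  [(0,0);(0,1);(0,2);(0,3);(1,0);(1,1);(1,2);(1,3);
   (2,0);(2,1);(2,2);(2,3);(3,0);(3,1);(3,2);(3,3)].

Lemma n4_range a : n4 a = 0 \/ n4 a = 1 \/ n4 a = 2 \/ n4 a = 3.
Proof. unfold n4. pose proof (Z.mod_pos_bound a 4). lia. Qed.

Lemma n4_in a b : In (n4 a, n4 b) allr4.
Proof. destruct (n4_range a) as [ -> | [ -> | [ -> | -> ] ] ]; destruct (n4_range b) as [ -> | [ -> | [ -> | -> ] ] ];
  simpl; tauto. Qed.

Lemma rho_in z : In (rho z) allr4.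
Proof. apply n4_in. Qed.
Lemma radd_in x y : In (radd x y) allr4.
Proof. apply n4_in. Qed.
Lemma rmul_in x y : In (rmul x y) allr4.
Proof. apply n4_in. Qed.

Definition r4eqb (x y : r4) : bool := Z.eqb (fst x) (fst y) && Z.eqb (snd x) (snd y).
Lemma r4eqb_eq x y : r4eqb x y = true <-> x = y.
Proof. destruct x, y; unfold r4eqb; simpl. rewrite andb_true_iff, !Z.eqb_eq.
  split; [intros [-> ->]; auto | intros H; inversion H; auto]. Qed.
Definition inb (x : r4) (l : list r4) : bool := existsb (r4eqb x) l.
Lemma inb_In x l : inb x l = true <-> In x l.
Proof. unfold inb; rewrite existsb_exists. split.
  - intros [y [Hy E]]. apply r4eqb_eq in E; subst; auto.
  - intros H; exists x; split; auto. apply r4eqb_eq; auto. Qed.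

Lemma fa1 (l : list r4) (P : r4 -> bool) : forallb P l = true -> forall x, In x l -> P x = true.
Proof. rewrite forallb_forall; auto. Qed.

Definition D1 : list r4 := [(1,0);(3,2)].
Definition P8 : list r4 := [(0,0);(0,2);(2,0);(2,2);(1,1);(1,3);(3,1);(3,3)].
Definition U4 : list r4 := [(1,0);(3,0);(0,1);(0,3)].
Definition C0 : list r4 := [(0,0);(2,2)].
Definition C1 : list r4 := [(0,2);(2,0)].
Definition rpar (x : r4) : bool := Z.odd (fst x + snd x).
Definition eb (x : r4) : bool := Z.odd (fst x).

Lemma fa2 l1 l2 (P : r4 -> r4 -> bool) :
  forallb (fun x => forallb (P x) l2) l1 = true -> forall x y, In x l1 -> In y l2 -> P x y = true.
Proof. rewrite forallb_forall; intros H x y Hx Hy. specialize (H x Hx).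
  rewrite forallb_forall in H; auto. Qed.
Lemma fa3 l1 l2 l3 (P : r4 -> r4 -> r4 -> bool) :
  forallb (fun x => forallb (fun y => forallb (P x y) l3) l2) l1 = true ->
  forall x y z, In x l1 -> In y l2 -> In z l3 -> P x y z = true.
Proof. rewrite forallb_forall; intros H x y z Hx Hy Hz. specialize (H x Hx).
  rewrite forallb_forall in H; specialize (H y Hy). rewrite forallb_forall in H; auto. Qed.

Lemma FC1b : forall x c, In x allr4 -> In c allr4 ->
  implb (r4eqb (radd x (3,0)) (rmul (2,2) c)) (inb x D1) = true.
Proof. apply fa2; vm_compute; reflexivity. Qed.
Lemma FC1 x c : In x allr4 -> In c allr4 -> radd x (3,0) = rmul (2,2) c -> In x D1.
Proof. intros Hx Hc E. pose proof (FC1b x c Hx Hc) as H.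
  assert (r4eqb (radd x (3,0)) (rmul (2,2) c) = true) as E' by (apply r4eqb_eq; auto).
  rewrite E' in H; simpl in H. apply inb_In; auto. Qed.

Lemma FParb : forall x y, In x allr4 -> In y allr4 ->
  Bool.eqb (rpar (radd x y)) (xorb (rpar x) (rpar y)) &&
  Bool.eqb (rpar (rmul x y)) (rpar x && rpar y) && Bool.eqb (rpar (rconj x)) (rpar x) = true.
Proof. apply fa2; vm_compute; reflexivity. Qed.
Lemma rpar_add x y : In x allr4 -> In y allr4 -> rpar (radd x y) = xorb (rpar x) (rpar y).
Proof. intros Hx Hy; pose proof (FParb x y Hx Hy) as H.
  rewrite !andb_true_iff in H. apply Bool.eqb_prop; tauto. Qed.
Lemma rpar_mul x y : In x allr4 -> In y allr4 -> rpar (rmul x y) = rpar x && rpar y.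
Proof. intros Hx Hy; pose proof (FParb x y Hx Hy) as H.
  rewrite !andb_true_iff in H. apply Bool.eqb_prop; tauto. Qed.
Lemma rpar_conj x : In x allr4 -> rpar (rconj x) = rpar x.
Proof. intros Hx; pose proof (FParb x x Hx Hx) as H.
  rewrite !andb_true_iff in H. apply Bool.eqb_prop; tauto. Qed.
Lemma rconj_in x : In x allr4 -> In (rconj x) allr4.
Proof. intros H; simpl in H; repeat destruct H as [<- | H]; simpl; tauto. Qed.

Lemma FP8 x : In x allr4 -> rpar x = false -> In x P8.
Proof. intros H; simpl in H; repeat destruct H as [<- | H]; simpl; try tauto; discriminate. Qed.
Lemma FD1par x : In x D1 -> rpar x = true.
Proof. intros H; simpl in H; repeat destruct H as [<- | H]; simpl; auto; tauto. Qed.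
Lemma D1_in x : In x D1 -> In x allr4.
Proof. intros H; simpl in H; repeat destruct H as [<- | H]; simpl; tauto. Qed.
Lemma P8_in x : In x P8 -> In x allr4.
Proof. intros H; simpl in H; repeat destruct H as [<- | H]; simpl; tauto. Qed.

Lemma FT1b : forall x a, In x D1 -> In a P8 ->
  inb (rmul x (rconj a)) P8 && Bool.eqb (eb (rmul x (rconj a))) (eb a) &&
  inb (rmul a (rconj x)) P8 && Bool.eqb (eb (rmul a (rconj x))) (eb a) = true.
Proof. apply fa2; vm_compute; reflexivity. Qed.
Lemma FT1 x a : In x D1 -> In a P8 ->
  (In (rmul x (rconj a)) P8 /\ eb (rmul x (rconj a)) = eb a) /\
  (In (rmul a (rconj x)) P8 /\ eb (rmul a (rconj x)) = eb a).
Proof. intros Hx Ha; pose proof (FT1b x a Hx Ha) as H. rewrite !andb_true_iff, !inb_In in H.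
  destruct H as [ [ [ H1 H2 ] H3 ] H4 ]; apply Bool.eqb_prop in H2, H4; auto. Qed.
Lemma FT2b : forall a b, In a P8 -> In b P8 ->
  inb (rmul a (rconj b)) P8 && negb (eb (rmul a (rconj b))) = true.
Proof. apply fa2; vm_compute; reflexivity. Qed.
Lemma FT2 a b : In a P8 -> In b P8 -> In (rmul a (rconj b)) P8 /\ eb (rmul a (rconj b)) = false.
Proof. intros Ha Hb; pose proof (FT2b a b Ha Hb) as H. rewrite !andb_true_iff, !inb_In in H.
  destruct H as [H1 H2]; apply negb_true_iff in H2; auto. Qed.
Lemma FS3b : forall u v w, In u P8 -> In v P8 -> In w P8 ->
  inb (radd u (radd v w)) P8 && Bool.eqb (eb (radd u (radd v w))) (xorb (eb u) (xorb (eb v) (eb w))) = true.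
Proof. apply fa3; vm_compute; reflexivity. Qed.
Lemma FS3 u v w : In u P8 -> In v P8 -> In w P8 ->
  eb (radd u (radd v w)) = xorb (eb u) (xorb (eb v) (eb w)).
Proof. intros Hu Hv Hw; pose proof (FS3b u v w Hu Hv Hw) as H. rewrite !andb_true_iff in H.
  apply Bool.eqb_prop; tauto. Qed.
Lemma FN1 x : In x D1 -> rmul x (rconj x) = (1,0).
Proof. intros H; simpl in H; repeat destruct H as [<- | H]; try reflexivity; tauto. Qed.
Definition nv (e : bool) : r4 := if e then (2,0) else (0,0).
Lemma FN2 a : In a P8 -> rmul a (rconj a) = nv (eb a).
Proof. intros H; simpl in H; repeat destruct H as [<- | H]; try reflexivity; tauto. Qed.

Lemma FC6a x y : In x D1 -> In y D1 -> In (rmul x y) D1.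
Proof. intros H H'; simpl in H, H'; repeat destruct H as [<- | H]; repeat destruct H' as [<- | H'];
  simpl; tauto. Qed.
Lemma FC6bb : forall a b, In a P8 -> In b P8 -> inb (rmul a b) (if eb a && eb b then C1 else C0) = true.
Proof. apply fa2; vm_compute; reflexivity. Qed.
Lemma FC6b a b : In a P8 -> In b P8 -> In (rmul a b) (if eb a && eb b then C1 else C0).
Proof. intros; apply inb_In, FC6bb; auto. Qed.
Lemma FC6cb : forall x y z, In x D1 -> In y allr4 -> In z allr4 ->
  implb ((inb y C0 && inb z C0) || (inb y C1 && inb z C1))
   (inb (radd x (radd y z)) D1 && inb (radd y (radd x z)) D1 && inb (radd y (radd z x)) D1) = true.
Proof. apply fa3; vm_compute; reflexivity. Qed.
Lemma FC6c x y z (C : list r4) : In x D1 -> (C = C0 \/ C = C1) -> In y C -> In z C ->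
  In (radd x (radd y z)) D1 /\ In (radd y (radd x z)) D1 /\ In (radd y (radd z x)) D1.
Proof. intros Hx HC Hy Hz.
  assert (Hy' : In y allr4) by (destruct HC; subst; simpl in Hy; repeat destruct Hy as [<- | Hy]; simpl; tauto).
  assert (Hz' : In z allr4) by (destruct HC; subst; simpl in Hz; repeat destruct Hz as [<- | Hz]; simpl; tauto).
  pose proof (FC6cb x y z Hx Hy' Hz') as H.
  assert (E : (inb y C0 && inb z C0) || (inb y C1 && inb z C1) = true).
  { apply inb_In in Hy; apply inb_In in Hz. destruct HC; subst; rewrite Hy, Hz; simpl; auto with bool. }
  rewrite E in H; cbn [implb] in H. rewrite !andb_true_iff, !inb_In in H. tauto. Qed.

Lemma FM u a : In u U4 -> In a D1 -> In (rmul (rmul u a) (rconj u)) D1.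
Proof. intros H H'; simpl in H, H'; repeat destruct H as [<- | H]; repeat destruct H' as [<- | H'];
  simpl; tauto. Qed.
Lemma FI x : In x D1 -> In (rmul (1,0) (rconj x)) D1.
Proof. intros H; simpl in H; repeat destruct H as [<- | H]; simpl; tauto. Qed.
Lemma FX u : In u U4 -> In u D1 -> u = (1,0).
Proof. intros H H'; simpl in H, H'; repeat destruct H as [<- | H]; repeat destruct H' as [H' | H'];
  try discriminate; auto; tauto. Qed.
Lemma FLab : forall x y, In x allr4 -> In y allr4 ->
  implb (r4eqb (rmul x y) (1,0) && Z.eqb (snd x) 0 && Z.eqb (snd y) 0)
   (Z.odd (fst x) && implb (Z.eqb (fst x) 1) (Z.eqb (fst y) 1)) = true.
Proof. apply fa2; vm_compute; reflexivity. Qed.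

Definition sig9 (b1 b2 b3 : bool) : idx := if b1 then i1 else if b2 then i2 else i3.
Definition sig (e : idx -> idx -> bool) (i : idx) : idx := sig9 (e i i1) (e i i2) (e i i3).
Definition o3 (a1 a2 a3 b1 b2 b3 : bool) : bool := xorb (a1 && b1) (xorb (a2 && b2) (a3 && b3)).

Lemma perm9 : forall b11 b12 b13 b21 b22 b23 b31 b32 b33 : bool,
  implb (o3 b11 b12 b13 b11 b12 b13 && o3 b21 b22 b23 b21 b22 b23 && o3 b31 b32 b33 b31 b32 b33
    && negb (o3 b11 b12 b13 b21 b22 b23) && negb (o3 b11 b12 b13 b31 b32 b33)
    && negb (o3 b21 b22 b23 b31 b32 b33))
  (Bool.eqb b11 (idx_eqb (sig9 b11 b12 b13) i1) && Bool.eqb b12 (idx_eqb (sig9 b11 b12 b13) i2)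
   && Bool.eqb b13 (idx_eqb (sig9 b11 b12 b13) i3)
   && Bool.eqb b21 (idx_eqb (sig9 b21 b22 b23) i1) && Bool.eqb b22 (idx_eqb (sig9 b21 b22 b23) i2)
   && Bool.eqb b23 (idx_eqb (sig9 b21 b22 b23) i3)
   && Bool.eqb b31 (idx_eqb (sig9 b31 b32 b33) i1) && Bool.eqb b32 (idx_eqb (sig9 b31 b32 b33) i2)
   && Bool.eqb b33 (idx_eqb (sig9 b31 b32 b33) i3)
   && negb (idx_eqb (sig9 b11 b12 b13) (sig9 b21 b22 b23))
   && negb (idx_eqb (sig9 b11 b12 b13) (sig9 b31 b32 b33))
   && negb (idx_eqb (sig9 b21 b22 b23) (sig9 b31 b32 b33))) = true.
Proof. intros [] [] [] [] [] [] [] [] []; reflexivity. Qed.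

Lemma idx_eqb_eq i j : idx_eqb i j = true <-> i = j.
Proof. destruct i, j; simpl; split; congruence. Qed.
Lemma idx_eqb_refl i : idx_eqb i i = true.
Proof. destruct i; reflexivity. Qed.
Lemma idx_eqb_sym i j : idx_eqb i j = idx_eqb j i.
Proof. destruct i, j; reflexivity. Qed.

Lemma perm_bool (e : idx -> idx -> bool) :
  (forall i j, o3 (e i i1) (e i i2) (e i i3) (e j i1) (e j i2) (e j i3) = idx_eqb i j) ->
  (forall i j, e i j = idx_eqb (sig e i) j) /\ (forall i j, sig e i = sig e j -> i = j).
Proof. intros H.
  pose proof (perm9 (e i1 i1) (e i1 i2) (e i1 i3) (e i2 i1) (e i2 i2) (e i2 i3)
                    (e i3 i1) (e i3 i2) (e i3 i3)) as P.
  rewrite (H i1 i1), (H i2 i2), (H i3 i3), (H i1 i2), (H i1 i3), (H i2 i3) in P.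
  cbn [implb idx_eqb negb andb] in P.
  rewrite !andb_true_iff in P.
  destruct P as [ [ [ [ [ [ [ [ [ [ [ P11 P12 ] P13 ] P21 ] P22 ] P23 ] P31 ] P32 ] P33 ] Q12 ] Q13 ] Q23 ].
  apply Bool.eqb_prop in P11, P12, P13, P21, P22, P23, P31, P32, P33.
  apply negb_true_iff in Q12, Q13, Q23. unfold sig. split.
  - intros [] []; auto.
  - intros [] [] E; auto; rewrite E, idx_eqb_refl in *; discriminate. Qed.

Definition rrow (M : idx -> idx -> r4) (i j : idx) : r4 :=
  radd (rmul (M i i1) (rconj (M j i1)))
   (radd (rmul (M i i2) (rconj (M j i2))) (rmul (M i i3) (rconj (M j i3)))).
Definition rprod (M N : idx -> idx -> r4) (i j : idx) : r4 :=
  radd (rmul (M i i1) (N i1 j)) (radd (rmul (M i i2) (N i2 j)) (rmul (M i i3) (N i3 j))).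

Lemma rpar_rrow M i j : (forall i j, In (M i j) allr4) ->
  rpar (rrow M i j) = o3 (rpar (M i i1)) (rpar (M i i2)) (rpar (M i i3))
                         (rpar (M j i1)) (rpar (M j i2)) (rpar (M j i3)).
Proof. intros HM. unfold rrow, o3.
  rewrite !rpar_add, !rpar_mul, !rpar_conj; auto using radd_in, rmul_in, rconj_in. Qed.

Lemma perm_r4 (M : idx -> idx -> r4) (l : Z) :
  (forall i j, In (M i j) allr4) -> Z.odd l = true ->
  (forall i j, rrow M i j = if idx_eqb i j then (l,0) else (0,0)) ->
  exists s : idx -> idx, (forall i j, s i = s j -> i = j) /\
     (forall i j, rpar (M i j) = idx_eqb (s i) j).
Proof. intros HM Hl HR.
  destruct (perm_bool (fun i j => rpar (M i j))) as [P1 P2].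
  - intros i j. rewrite <- rpar_rrow by auto. rewrite HR.
    destruct (idx_eqb i j); unfold rpar; simpl; auto. rewrite Z.add_0_r; auto.
  - exists (sig (fun i j => rpar (M i j))); split; auto. Qed.

Lemma L4 (M : idx -> idx -> r4) (l : Z) :
  (forall i j, In (M i j) allr4) -> Z.odd l = true ->
  (forall i, In (M i i) D1) ->
  (forall i j, rrow M i j = if idx_eqb i j then (l,0) else (0,0)) ->
  l = 1 /\ exists t, forall i j, i <> j -> In (M i j) P8 /\ eb (M i j) = t.
Proof. intros HM Hl HD HR.
  destruct (perm_r4 M l HM Hl HR) as [s [Hs1 Hs2]].
  assert (Hss : forall i, s i = i).
  { intros i. pose proof (Hs2 i i) as E. rewrite (FD1par _ (HD i)) in E.
    symmetry in E; apply idx_eqb_eq in E; auto. }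
  assert (HP : forall i j, i <> j -> In (M i j) P8).
  { intros i j Hij. apply FP8; auto. rewrite Hs2, Hss.
    destruct (idx_eqb i j) eqn:E; auto. apply idx_eqb_eq in E; contradiction. }
  assert (P12 := HP i1 i2 ltac:(discriminate)). assert (P13 := HP i1 i3 ltac:(discriminate)).
  assert (P21 := HP i2 i1 ltac:(discriminate)). assert (P23 := HP i2 i3 ltac:(discriminate)).
  assert (P31 := HP i3 i1 ltac:(discriminate)). assert (P32 := HP i3 i2 ltac:(discriminate)).
  pose proof (HD i1) as D11. pose proof (HD i2) as D22. pose proof (HD i3) as D33.
  assert (O12 : eb (M i2 i1) = eb (M i1 i2)).
  { pose proof (HR i1 i2) as E. simpl in E. unfold rrow in E.
    destruct (FT1 _ _ D11 P21) as [[A1 A2] _]. destruct (FT1 _ _ D22 P12) as [_ [B1 B2]].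
    destruct (FT2 _ _ P13 P23) as [C1 C2].
    pose proof (FS3 _ _ _ A1 B1 C1) as F. rewrite E, A2, B2, C2 in F.
    destruct (eb (M i2 i1)), (eb (M i1 i2)); simpl in F; auto; discriminate. }
  assert (O13 : eb (M i3 i1) = eb (M i1 i3)).
  { pose proof (HR i1 i3) as E. simpl in E. unfold rrow in E.
    destruct (FT1 _ _ D11 P31) as [[A1 A2] _]. destruct (FT1 _ _ D33 P13) as [_ [B1 B2]].
    destruct (FT2 _ _ P12 P32) as [C1 C2].
    pose proof (FS3 _ _ _ A1 C1 B1) as F. rewrite E, A2, B2, C2 in F.
    destruct (eb (M i3 i1)), (eb (M i1 i3)); simpl in F; auto; discriminate. }
  assert (O23 : eb (M i3 i2) = eb (M i2 i3)).
  { pose proof (HR i2 i3) as E. simpl in E. unfold rrow in E.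
    destruct (FT1 _ _ D22 P32) as [[A1 A2] _]. destruct (FT1 _ _ D33 P23) as [_ [B1 B2]].
    destruct (FT2 _ _ P21 P31) as [C1 C2].
    pose proof (FS3 _ _ _ C1 A1 B1) as F. rewrite E, A2, B2, C2 in F.
    destruct (eb (M i3 i2)), (eb (M i2 i3)); simpl in F; auto; discriminate. }
  pose proof (HR i1 i1) as N1. pose proof (HR i2 i2) as N2. pose proof (HR i3 i3) as N3.
  simpl in N1, N2, N3. unfold rrow in N1, N2, N3.
  rewrite (FN1 _ D11), (FN2 _ P12), (FN2 _ P13) in N1.
  rewrite (FN1 _ D22), (FN2 _ P21), (FN2 _ P23) in N2.
  rewrite (FN1 _ D33), (FN2 _ P31), (FN2 _ P32) in N3.
  rewrite O12 in N2. rewrite O13 in N3. rewrite O23 in N3.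
  assert (T : l = 1 /\ eb (M i1 i3) = eb (M i1 i2) /\ eb (M i2 i3) = eb (M i1 i2)).
  { destruct (eb (M i1 i2)), (eb (M i1 i3)), (eb (M i2 i3)); vm_compute in N1, N2, N3;
    inversion N1; inversion N2; inversion N3; subst; try lia; auto. }
  destruct T as [Tl [T13 T23]]. split; auto. exists (eb (M i1 i2)).
  intros [] [] Hij; try (exfalso; apply Hij; reflexivity); split; auto; congruence. Qed.

Lemma C4 (M N : idx -> idx -> r4) (tM tN : bool) :
  (forall i, In (M i i) D1) -> (forall i, In (N i i) D1) ->
  (forall i j, i <> j -> In (M i j) P8 /\ eb (M i j) = tM) ->
  (forall i j, i <> j -> In (N i j) P8 /\ eb (N i j) = tN) ->
  forall i, In (rprod M N i i) D1.
Proof. intros DM DN OM ON.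
  assert (K : forall a b c d, a <> b -> c <> d -> In (rmul (M a b) (N c d)) (if tM && tN then C1 else C0)).
  { intros a b c d H1 H2. destruct (OM a b H1) as [A1 A2]. destruct (ON c d H2) as [B1 B2].
    rewrite <- A2, <- B2. apply FC6b; auto. }
  assert (HC : (if tM && tN then C1 else C0) = C0 \/ (if tM && tN then C1 else C0) = C1)
    by (destruct (tM && tN); auto).
  intros i; unfold rprod; destruct i.
  - apply (FC6c _ _ _ _ (FC6a _ _ (DM i1) (DN i1)) HC); apply K; discriminate.
  - apply (FC6c _ _ _ _ (FC6a _ _ (DM i2) (DN i2)) HC); apply K; discriminate.
  - apply (FC6c _ _ _ _ (FC6a _ _ (DM i3) (DN i3)) HC); apply K; discriminate.
Qed.

Lemma pow2_split n k : 2 ^ Z.of_nat (n + k) = 2 ^ Z.of_nat n * 2 ^ Z.of_nat k.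
Proof. rewrite Nat2Z.inj_add, Z.pow_add_r; lia. Qed.

Lemma coh_le (x : Z2) k n : (2 ^ Z.of_nat n | z2seq x (n + k) - z2seq x n).
Proof. induction k.
  - rewrite Nat.add_0_r, Z.sub_diag. apply Z.divide_0_r.
  - replace (z2seq x (n + S k) - z2seq x n) with
      ((z2seq x (S (n + k)) - z2seq x (n + k)) + (z2seq x (n + k) - z2seq x n))
      by (rewrite <- plus_n_Sm; ring).
    apply Z.divide_add_r; auto.
    eapply Z.divide_trans; [|apply z2coh]. rewrite pow2_split. apply Z.divide_factor_l. Qed.

Lemma Z2div4 (x : Z2) : (4 | z2seq x 2) -> exists y, Z2eq x (Z2mul (Z2const 4) y).
Proof. intros H4.
  assert (Hd : forall n, (4 | z2seq x (n + 2))).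
  { intros n. replace (z2seq x (n + 2)) with ((z2seq x (2 + n) - z2seq x 2) + z2seq x 2)
      by (rewrite Nat.add_comm; ring).
    apply Z.divide_add_r; auto. apply (coh_le x n 2%nat). }
  assert (He : forall n, z2seq x (n + 2) = 4 * (z2seq x (n + 2) / 4)).
  { intros n. destruct (Hd n) as [q Hq]. rewrite Hq, Z.div_mul by lia. ring. }
  unshelve eexists (mkZ2 (fun n => z2seq x (n + 2) / 4) _).
  - intros n. cbv beta. apply (Z.mul_divide_cancel_l _ _ 4); [lia|].
    rewrite Z.mul_sub_distr_l, <- (He (S n)), <- (He n).
    replace (4 * 2 ^ Z.of_nat n) with (2 ^ Z.of_nat (n + 2)) by (rewrite pow2_split; change (2 ^ Z.of_nat 2) with 4; ring).
    replace (S n + 2)%nat with (S (n + 2)) by lia.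
    apply z2coh.
  - intros n; cbn [z2seq Z2mul Z2const]. rewrite <- He.
    replace (z2seq x n - z2seq x (n + 2)) with (- (z2seq x (n + 2) - z2seq x n)) by ring.
    apply Z.divide_opp_r. apply coh_le. Qed.

Lemma Z2cancel2 (x y : Z2) : Z2eq (Z2mul (Z2const 2) x) (Z2mul (Z2const 2) y) -> Z2eq x y.
Proof. intros H n. specialize (H (S n)). cbn [z2seq Z2mul Z2const] in H.
  replace (2 * z2seq x (S n) - 2 * z2seq y (S n)) with (2 * (z2seq x (S n) - z2seq y (S n))) in H by ring.
  replace (2 ^ Z.of_nat (S n)) with (2 * 2 ^ Z.of_nat n) in H by (rewrite Nat2Z.inj_succ, Z.pow_succ_r; lia).
  apply Z.mul_divide_cancel_l in H; [|lia].
  replace (z2seq x n - z2seq y n) with ((z2seq x (S n) - z2seq y (S n))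
     - (z2seq x (S n) - z2seq x n) + (z2seq y (S n) - z2seq y n)) by ring.
  apply Z.divide_add_r; [apply Z.divide_sub_r|]; auto using z2coh. Qed.

Lemma Z2cancel4 (x y : Z2) : Z2eq (Z2mul (Z2const 4) x) (Z2mul (Z2const 4) y) -> Z2eq x y.
Proof. intros H. apply Z2cancel2, Z2cancel2.
  transitivity (Z2mul (Z2const 4) x); [zseq|]. rewrite H; zseq. Qed.

Ltac m4 x := pose proof (Z.div_mod x 4 ltac:(lia)); pose proof (Z.mod_pos_bound x 4 ltac:(lia)).

Lemma mod_div4 a : a mod 4 = 0 -> (4 | a).
Proof. intros H. apply Z.mod_divide; lia. Qed.

Lemma cong_D1 z : Z2icong z Z2ione (Zi 2 2) <-> In (rho z) D1.
Proof. split.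
  - intros [c Hc]. apply rho_eq in Hc. unfold Z2isub in Hc.
    rewrite rho_add, rho_mul in Hc. apply (FC1 _ (rho c)); auto using rho_in.
  - intros HD.
    assert (Hr : (z2seq (re z) 2 mod 4 = 1 /\ z2seq (im z) 2 mod 4 = 0) \/
                 (z2seq (re z) 2 mod 4 = 3 /\ z2seq (im z) 2 mod 4 = 2)).
    { unfold rho, n4 in HD; simpl in HD. destruct HD as [HD|[HD|[]]]; inversion HD; auto. }
    set (a := Z2add (re z) (Z2opp Z2one)). set (b := Z2add (im z) (Z2opp Z2zero)).
    destruct (Z2div4 (Z2add a b)) as [y1 H1].
    { apply mod_div4. unfold a, b; cbn [z2seq Z2add Z2opp Z2one Z2zero Z2const re].
      match goal with |- ?e mod 4 = 0 => m4 e end. m4 (z2seq (re z) 2). m4 (z2seq (im z) 2). lia. }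
    destruct (Z2div4 (Z2add b (Z2opp a))) as [y2 H2].
    { apply mod_div4. unfold a, b; cbn [z2seq Z2add Z2opp Z2one Z2zero Z2const re].
      match goal with |- ?e mod 4 = 0 => m4 e end. m4 (z2seq (re z) 2). m4 (z2seq (im z) 2). lia. }
    exists (mkZ2i y1 y2). split; simpl; apply Z2cancel4.
    + transitivity (Z2add (Z2mul (Z2const 2) (Z2add a b)) (Z2opp (Z2mul (Z2const 2) (Z2add b (Z2opp a)))));
        [unfold a, b; zseq|]. rewrite H1, H2. zseq.
    + transitivity (Z2add (Z2mul (Z2const 2) (Z2add a b)) (Z2mul (Z2const 2) (Z2add b (Z2opp a))));
        [unfold a, b; zseq|]. rewrite H1, H2. zseq.
Qed.

#[global] Instance rho_Proper : Proper (Z2ieq ==> eq) rho.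
Proof. intros ? ? ?; apply rho_eq; auto. Qed.

Definition rhoM (A : M3) : idx -> idx -> r4 := fun i j => rho (A i j).

Lemma rho_mmul A B i j : rho (mmul A B i j) = rprod (rhoM A) (rhoM B) i j.
Proof. unfold mmul, rprod, rhoM. rewrite !rho_add, !rho_mul. reflexivity. Qed.
Lemma rho_row A i j : rho (mmul A (mstar A) i j) = rrow (rhoM A) i j.
Proof. unfold mmul, mstar, rrow, rhoM. rewrite !rho_add, !rho_mul, !rho_conj. reflexivity. Qed.

Lemma unit_rho la u : Z2eq (Z2mul la u) Z2one ->
  rmul (n4 (z2seq la 2), 0) (n4 (z2seq u 2), 0) = (1,0).
Proof. intros H. assert (H' : Z2ieq (ofZ2 (Z2mul la u)) (ofZ2 Z2one)) by (rewrite H; reflexivity).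
  apply rho_eq in H'. rewrite ofZ2_mul, rho_mul in H'. exact H'. Qed.

Lemma unit_odd la u : Z2eq (Z2mul la u) Z2one ->
  Z.odd (n4 (z2seq la 2)) = true /\ (n4 (z2seq la 2) = 1 -> n4 (z2seq u 2) = 1).
Proof. intros H. pose proof (unit_rho _ _ H) as E.
  pose proof (FLab (n4 (z2seq la 2), n4 0) (n4 (z2seq u 2), n4 0) (n4_in _ _) (n4_in _ _)) as F.
  change (n4 0) with 0 in F. rewrite E in F. simpl in F. apply andb_true_iff in F as [F1 F2].
  split; auto. intros E1. rewrite E1 in F2. simpl in F2. apply Z.eqb_eq; auto. Qed.

Lemma GU3_rrow A la : meq (mmul A (mstar A)) (mscalar (ofZ2 la)) ->
  forall i j, rrow (rhoM A) i j = if idx_eqb i j then (n4 (z2seq la 2), 0) else (0,0).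
Proof. intros H i j. rewrite <- rho_row. rewrite (rho_eq _ _ (H i j)). unfold mscalar.
  destruct (idx_eqb i j); reflexivity. Qed.

Lemma rhoM_in A : forall i j, In (rhoM A i j) allr4.
Proof. intros; apply rho_in. Qed.

Lemma KL A : Ktilde2 A ->
  (forall i, In (rhoM A i i) D1) /\
  (exists t, forall i j, i <> j -> In (rhoM A i j) P8 /\ eb (rhoM A i j) = t) /\
  (forall la, Z2unit la -> meq (mmul A (mstar A)) (mscalar (ofZ2 la)) -> n4 (z2seq la 2) = 1).
Proof. intros [[_ [la [[u Hu] HA]]] HD].
  assert (HD' : forall i, In (rhoM A i i) D1) by (intros i; apply cong_D1; auto).
  split; auto.
  destruct (L4 (rhoM A) (n4 (z2seq la 2)) (rhoM_in A) (proj1 (unit_odd _ _ Hu)) HD' (GU3_rrow _ _ HA))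
    as [_ Ht]. split; auto.
  intros la' [u' Hu'] HA'.
  destruct (L4 (rhoM A) (n4 (z2seq la' 2)) (rhoM_in A) (proj1 (unit_odd _ _ Hu')) HD' (GU3_rrow _ _ HA'))
    as [E _]; auto. Qed.

Lemma Ktilde2_meq A A' : meq A A' -> Ktilde2 A -> Ktilde2 A'.
Proof. intros E [HG HD]. split; [eapply GU3_meq; eauto|].
  intros i. apply cong_D1. rewrite <- (rho_eq _ _ (E i i)). apply cong_D1; auto. Qed.

Lemma Ktilde2_mul A B : Ktilde2 A -> Ktilde2 B -> Ktilde2 (mmul A B).
Proof. intros HA HB. split; [apply GU3_mul; [apply HA|apply HB]|].
  destruct (KL A HA) as [DA [[tA OA] _]]. destruct (KL B HB) as [DB [[tB OB] _]].
  intros i; apply cong_D1. rewrite rho_mmul. eapply C4; eauto. Qed.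

Lemma GU3_inv_form A h la u : meq (mmul h A) mI -> meq (mmul A (mstar A)) (mscalar (ofZ2 la)) ->
  Z2eq (Z2mul la u) Z2one -> meq h (msc (ofZ2 u) (mstar A)).
Proof. intros H2 HA Hu. rewrite (GU3_adj _ _ _ H2 HA), msc_msc, <- ofZ2_mul.
  assert (E: Z2eq (Z2mul u la) Z2one) by (rewrite <- Hu; zseq).
  rewrite E. symmetry. transitivity (msc Z2ione h); [|apply msc_one].
  apply msc_Proper; [zseq|reflexivity]. Qed.

Lemma Ktilde2_inv A : Ktilde2 A -> exists B, Ktilde2 B /\ meq (mmul A B) mI /\ meq (mmul B A) mI.
Proof. intros HK. pose proof HK as [[[h [H1 H2]] [la [[u Hu] HA]]] HD].
  exists h. split; [|auto]. split.
  - eapply GU3_inv; [apply HK|eauto|eauto].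
  - destruct (KL A HK) as [DA [_ Hl]].
    assert (Hl1 : n4 (z2seq la 2) = 1) by (apply Hl; [exists u; auto|auto]).
    assert (Hu1 : n4 (z2seq u 2) = 1) by (apply (proj2 (unit_odd _ _ Hu)); auto).
    pose proof (GU3_inv_form _ _ _ _ H2 HA Hu) as Hf.
    intros i. apply cong_D1. rewrite (rho_eq _ _ (Hf i i)). unfold msc, mstar.
    rewrite rho_mul, rho_conj, rho_ofZ2, Hu1. apply FI. apply DA. Qed.

Ltac u4 := unfold unit4; first [ left; zseq | right; left; zseq | right; right; left; zseq
  | right; right; right; zseq ].

Lemma unit4_meq a b : Z2ieq a b -> unit4 a -> unit4 b.
Proof. intros E H. unfold unit4 in *. rewrite <- E. auto. Qed.
#[global] Instance unit4_Proper : Proper (Z2ieq ==> iff) unit4.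
Proof. intros a b E; split; apply unit4_meq; auto; symmetry; auto. Qed.
Lemma Zi_mul a b c d : Z2ieq (Z2imul (Zi a b) (Zi c d)) (Zi (a*c - b*d) (a*d + b*c)).
Proof. zseq. Qed.
Lemma unit4_mul a b : unit4 a -> unit4 b -> unit4 (Z2imul a b).
Proof. intros Ha Hb.
  destruct Ha as [Ha|[Ha|[Ha|Ha]]]; destruct Hb as [Hb|[Hb|[Hb|Hb]]]; rewrite Ha, Hb; u4. Qed.
Lemma unit4_conj a : unit4 a -> unit4 (Z2iconj a).
Proof. intros Ha. destruct Ha as [Ha|[Ha|[Ha|Ha]]]; rewrite Ha; u4. Qed.
Lemma unit4_norm a : unit4 a -> Z2ieq (Z2imul a (Z2iconj a)) Z2ione.
Proof. intros Ha. destruct Ha as [Ha|[Ha|[Ha|Ha]]]; rewrite Ha; zseq. Qed.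
Lemma unit4_rho a : unit4 a -> In (rho a) U4.
Proof. intros Ha. destruct Ha as [Ha|[Ha|[Ha|Ha]]]; rewrite Ha; simpl; tauto. Qed.

Lemma row_lemma A B i c j : (forall k, k <> c -> Z2ieq (A i k) Z2izero) ->
  Z2ieq (mmul A B i j) (Z2imul (A i c) (B c j)).
Proof. intros H. unfold mmul. destruct c;
  repeat match goal with |- context [A i ?k] =>
    match k with c => fail 1 | _ => rewrite (H k ltac:(discriminate)) end end; zseq. Qed.
Lemma col_lemma A B i c j : (forall k, k <> c -> Z2ieq (B k j) Z2izero) ->
  Z2ieq (mmul A B i j) (Z2imul (A i c) (B c j)).
Proof. intros H. unfold mmul. destruct c;
  repeat match goal with |- context [B ?k j] =>
    match k with c => fail 1 | _ => rewrite (H k ltac:(discriminate)) end end; zseq. Qed.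

Lemma inj_inv (s : idx -> idx) : (forall i j, s i = s j -> i = j) ->
  exists t : idx -> idx, (forall j, s (t j) = j) /\ (forall i, t (s i) = i).
Proof. intros Hs.
  exists (fun j => if idx_eqb (s i1) j then i1 else if idx_eqb (s i2) j then i2 else i3).
  assert (N12 : s i1 <> s i2) by (intros E; apply Hs in E; discriminate).
  assert (N13 : s i1 <> s i3) by (intros E; apply Hs in E; discriminate).
  assert (N23 : s i2 <> s i3) by (intros E; apply Hs in E; discriminate).
  destruct (s i1) eqn:E1, (s i2) eqn:E2, (s i3) eqn:E3; try congruence;
  split; intros []; simpl; rewrite ?E1, ?E2, ?E3; reflexivity. Qed.

Lemma GU3Z_star A : GU3Z A -> GU3Z (mstar A).
Proof. intros [s [Hs H]]. destruct (inj_inv s Hs) as [t [Ht1 Ht2]].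
  exists t. split.
  - intros i j E. rewrite <- (Ht1 i), <- (Ht1 j), E. reflexivity.
  - intros i j; split; intros E; unfold mstar.
    + subst j. apply unit4_conj. apply (H (t i) i). rewrite Ht1; auto.
    + assert (Z2ieq (A j i) Z2izero) as Z.
      { apply (H j i). intros E'. apply E. rewrite E', Ht2. reflexivity. }
      rewrite Z. zseq. Qed.

Lemma GU3Z_unitary A : GU3Z A -> meq (mmul A (mstar A)) mI.
Proof. intros [s [Hs H]] i j.
  rewrite (row_lemma A (mstar A) i (s i) j).
  2: { intros k Hk. apply (H i k); auto. }
  unfold mstar, mI, mscalar. destruct (idx_eqb i j) eqn:E.
  - apply idx_eqb_eq in E; subst j. apply unit4_norm. apply (H i (s i)); auto.
  - assert (Z2ieq (A j (s i)) Z2izero) as Z.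
    { apply (H j (s i)). intros E'. apply Hs in E'. subst j. rewrite idx_eqb_refl in E; discriminate. }
    rewrite Z. zseq. Qed.

Lemma GU3Z_unitary2 A : GU3Z A -> meq (mmul (mstar A) A) mI.
Proof. intros H. rewrite <- (mstar_mstar A) at 2. apply GU3Z_unitary, GU3Z_star; auto. Qed.

Lemma GU3Z_GU3 A : GU3Z A -> GU3 A.
Proof. intros H. split.
  - exists (mstar A); split; [apply GU3Z_unitary|apply GU3Z_unitary2]; auto.
  - exists Z2one. split; [exists Z2one; zseq|]. apply GU3Z_unitary; auto. Qed.

Lemma GU3Z_I : GU3Z mI.
Proof. exists (fun i => i). split; auto. intros i j; split; intros E.
  - subst j. unfold mI, mscalar. rewrite idx_eqb_refl. u4.
  - unfold mI, mscalar. destruct (idx_eqb i j) eqn:E'; [|reflexivity].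
    apply idx_eqb_eq in E'; congruence. Qed.

Lemma GU3Z_mul A B : GU3Z A -> GU3Z B -> GU3Z (mmul A B).
Proof. intros [s [Hs HA]] [t [Ht HB]]. exists (fun i => t (s i)). split.
  - intros i j E; auto.
  - intros i j. rewrite (row_lemma A B i (s i) j) by (intros k Hk; apply (HA i k); auto).
    split; intros E.
    + subst j. apply unit4_mul; [apply (HA i (s i))|apply (HB (s i) (t (s i)))]; auto.
    + rewrite (proj2 (HB (s i) j) E). zseq. Qed.

Lemma GU3Z_inv A : GU3Z A -> exists B, GU3Z B /\ meq (mmul A B) mI /\ meq (mmul B A) mI.
Proof. intros H. exists (mstar A). split; [apply GU3Z_star; auto|].
  split; [apply GU3Z_unitary|apply GU3Z_unitary2]; auto. Qed.

Definition cu (w : r4) : Z * Z :=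
  if inb w [(1,0);(3,2)] then (1,0) else if inb w [(3,0);(1,2)] then (-1,0)
  else if inb w [(0,1);(2,3)] then (0,1) else (0,-1).

Lemma FUb : forallb (fun w => implb (rpar w)
   (inb (rmul w (rconj (n4 (fst (cu w)), n4 (snd (cu w))))) D1)) allr4 = true.
Proof. vm_compute; reflexivity. Qed.
Lemma FU w : In w allr4 -> rpar w = true -> In (rmul w (rconj (n4 (fst (cu w)), n4 (snd (cu w))))) D1.
Proof. intros Hw Hp. pose proof (fa1 _ _ FUb w Hw) as H. cbv beta in H. rewrite Hp in H.
  apply inb_In; exact H. Qed.
Lemma unit4_cu w : unit4 (Zi (fst (cu w)) (snd (cu w))).
Proof. unfold cu. destruct (inb w _); [cbn [fst snd]; u4|]. destruct (inb w _); [cbn [fst snd]; u4|].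
  destruct (inb w _); cbn [fst snd]; u4. Qed.

Lemma decomp g : GU3 g -> exists k h, Ktilde2 k /\ GU3Z h /\ meq g (mmul k h).
Proof. intros HG. pose proof HG as [_ [la [[u Hu] HA]]].
  destruct (perm_r4 (rhoM g) (n4 (z2seq la 2)) (rhoM_in g) (proj1 (unit_odd _ _ Hu)) (GU3_rrow _ _ HA))
    as [s [Hs Hp]].
  set (w := fun i => rhoM g i (s i)).
  set (h := fun i j => if idx_eqb (s i) j then Zi (fst (cu (w i))) (snd (cu (w i))) else Z2izero).
  assert (Hh : GU3Z h).
  { exists s; split; auto. intros i j; split; intros E; unfold h.
    - subst j; rewrite idx_eqb_refl; apply unit4_cu.
    - destruct (idx_eqb (s i) j) eqn:E'; [apply idx_eqb_eq in E'; congruence|reflexivity]. }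
  exists (mmul g (mstar h)), h. split; [|split; auto].
  - split.
    + apply GU3_mul; auto. apply GU3Z_GU3, GU3Z_star; auto.
    + intros i. apply cong_D1. rewrite (col_lemma g (mstar h) i (s i) i).
      2: { intros k Hk. unfold mstar, h. destruct (idx_eqb (s i) k) eqn:E;
           [apply idx_eqb_eq in E; congruence|zseq]. }
      unfold mstar, h. rewrite idx_eqb_refl, rho_mul, rho_conj, rho_Zi.
      apply FU; [apply rho_in|]. pose proof (Hp i (s i)) as P. rewrite idx_eqb_refl in P. exact P.
  - rewrite mmul_assoc, GU3Z_unitary2, mmul_1_r by auto. reflexivity. Qed.

Lemma conj_mono A m : Ktilde2 A -> GU3Z m -> Ktilde2 (mmul (mmul m A) (mstar m)).
Proof. intros HA Hm. split.
  - apply GU3_mul; [apply GU3_mul; [apply GU3Z_GU3; auto|apply HA]|].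
    apply GU3Z_GU3, GU3Z_star; auto.
  - destruct (KL A HA) as [DA _]. destruct Hm as [s [Hs Hms]].
    intros i; apply cong_D1.
    rewrite (col_lemma (mmul m A) (mstar m) i (s i) i).
    2: { intros k Hk. unfold mstar. rewrite (proj2 (Hms i k) Hk). zseq. }
    rewrite (row_lemma m A i (s i) (s i)) by (intros k Hk; apply (proj2 (Hms i k)); auto).
    unfold mstar. rewrite !rho_mul, rho_conj. apply FM.
    + apply unit4_rho. apply (proj1 (Hms i (s i))); auto.
    + apply DA. Qed.

Lemma normal g h A : GU3 g -> meq (mmul g h) mI -> meq (mmul h g) mI ->
  Ktilde2 A -> Ktilde2 (mmul (mmul g A) h).
Proof. intros HG H1 H2 HA.
  destruct (decomp g HG) as [k [m [Hk [Hm Hg]]]].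
  destruct (Ktilde2_inv k Hk) as [k' [Hk' [Hkk' Hk'k]]].
  assert (Hh : meq h (mmul (mstar m) k')).
  { transitivity (mmul h (mmul g (mmul (mstar m) k'))).
    - rewrite Hg, (mmul_assoc k m), <- (mmul_assoc m (mstar m) k'), GU3Z_unitary by auto.
      rewrite mmul_1_l, Hkk', mmul_1_r. reflexivity.
    - rewrite <- mmul_assoc, H2, mmul_1_l. reflexivity. }
  apply (Ktilde2_meq (mmul k (mmul (mmul (mmul m A) (mstar m)) k'))).
  { rewrite Hg, Hh. rewrite !mmul_assoc. reflexivity. }
  apply Ktilde2_mul; auto. apply Ktilde2_mul; auto. apply conj_mono; auto. Qed.

Lemma inter A : Ktilde2 A -> GU3Z A -> meq A mI.
Proof. intros HK [s [Hs HA]]. destruct (KL A HK) as [DA _].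
  assert (Hss : forall i, s i = i).
  { intros i. destruct (idx_eqb (s i) i) eqn:E; [apply idx_eqb_eq; auto|].
    exfalso. assert (Z : Z2ieq (A i i) Z2izero).
    { apply (HA i i). intros E'. rewrite <- E', idx_eqb_refl in E. discriminate. }
    pose proof (DA i) as D. unfold rhoM in D. rewrite Z in D. simpl in D. intuition discriminate. }
  intros i j. unfold mI, mscalar. destruct (idx_eqb i j) eqn:E.
  - apply idx_eqb_eq in E; subst j.
    assert (U : unit4 (A i i)) by (apply (HA i i); rewrite Hss; auto).
    pose proof (DA i) as D. unfold rhoM in D.
    destruct U as [U|[U|[U|U]]]; rewrite U in D; rewrite U; try reflexivity;
      vm_compute in D; intuition discriminate.
  - apply (HA i j). rewrite Hss. intros E'; subst j; rewrite idx_eqb_refl in E; discriminate. Qed.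

Lemma Ktilde2_I : Ktilde2 mI.
Proof. split; [apply GU3Z_GU3, GU3Z_I|]. intros i. apply cong_D1.
  unfold mI, mscalar. rewrite idx_eqb_refl. simpl; auto. Qed.

Theorem proposition5p5 :
  (* K~_2 is a group (a subgroup of GU_3(Z_2)) *)
  (Ktilde2 mI /\
   (forall A B, Ktilde2 A -> Ktilde2 B -> Ktilde2 (mmul A B)) /\
   (forall A, Ktilde2 A ->
      exists B, Ktilde2 B /\ meq (mmul A B) mI /\ meq (mmul B A) mI)) /\
  (* K~_2 is normal in GU_3(Z_2) *)
  (forall g h A, GU3 g -> meq (mmul g h) mI -> meq (mmul h g) mI ->
      Ktilde2 A -> Ktilde2 (mmul (mmul g A) h)) /\
  (* GU_3(Z) is a subgroup of GU_3(Z_2) *)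
  (GU3Z mI /\
   (forall A, GU3Z A -> GU3 A) /\
   (forall A B, GU3Z A -> GU3Z B -> GU3Z (mmul A B)) /\
   (forall A, GU3Z A ->
      exists B, GU3Z B /\ meq (mmul A B) mI /\ meq (mmul B A) mI)) /\
  (* trivial intersection *)
  (forall A, Ktilde2 A -> GU3Z A -> meq A mI) /\
  (* GU_3(Z_2) = K~_2 * GU_3(Z) *)
  (forall g, GU3 g -> exists k h, Ktilde2 k /\ GU3Z h /\ meq g (mmul k h)).
Proof.
  split.
  { split; [exact Ktilde2_I|]. split; [exact Ktilde2_mul|exact Ktilde2_inv]. }
  split; [exact normal|].
  split.
  { split; [exact GU3Z_I|]. split; [exact GU3Z_GU3|]. split; [exact GU3Z_mul|exact GU3Z_inv]. }
  split; [exact inter|exact decomp].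
Qed.
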